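(* Let $G=(V,E)$ be a finite planar embedded graph with $V=\{1,\dots,n\}$, let $\mathbf{p}$ be a packing of $G$, and let $V=V^+\sqcup V^-\sqcup V^=\sqcup V^0$ be a partition of the vertices. Then $\mathbf{p}$ is infinitesimally rigid (with respect to this partition) if and only if both of the following hold: (1) (Fixed radius condition) Every infinitesimal flex $\mathbf{p}'$ of $\mathbf{p}$ with $r_k'=0$ for all $k\in V^+\cup V^-\cup V^=$ is trivial; (2) (Stress existence condition) There exists an equilibrium stress $\omega$ on $(G,\mathbf{p})$ whose radial force sum $\omega_i=\sum_{j:(i,j)\in E}\omega_{ij}(r_i+r_j)$ is strictly positive for every $i\in V^-$, strictly negative for every $i\in V^+$, and equal to $0$ for every $i\in V^0$.
   Context: A packing of a planar embedded graph $G=(V,E)$, $V=\{1,\dots,n\}$, is a vector $\mathbf{p}=(x_1,y_1,r_1,\dots,x_n,y_n,r_n)\in\mathbb{R}^{3n}$ with all $r_i>0$ such that for every edge $(i,j)\in E$, $(r_i+r_j)^2=(x_i-x_j)^2+(y_i-y_j)^2$ (circle $i$ of center $\mathbf{p}_i=(x_i,y_i)$ and radius $r_i$ is externally tangent to circle $j$), and around each vertex the neighbors appear in the same counterclockwise order as in the given planar embedding. Disks not joined by an edge may overlap. The vertex set is partitioned into $V^+$ (radii allowed to increase or stay), $V^-$ (allowed to decrease or stay), $V^=$ (fixed radii), $V^0$ (free). An infinitesimal flex is a vector $\mathbf{p}'=(x_1',y_1',r_1',\dots,x_n',y_n',r_n')$ with $(\mathbf{p}_i-\mathbf{p}_j)\cdot(\mathbf{p}_i'-\mathbf{p}_j')=(r_i+r_j)(r_i'+r_j')$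 for all $(i,j)\in E$, where $\mathbf{p}_i'=(x_i',y_i')$. It is proper if $r_i'\ge 0$ for $i\in V^+$, $r_i'\le 0$ for $i\in V^-$, $r_i'=0$ for $i\in V^=$. It is trivial if it is the derivative at $t=0$ of a smooth family of congruent motions (rotations and translations of the plane applied to all centers, radii unchanged). The packing is infinitesimally rigid if every proper infinitesimal flex is trivial. A stress is a function $\omega:E\to\mathbb{R}$, $\omega_{ij}=\omega_{ji}$; it is an equilibrium stress if $\sum_{j:(i,j)\in E}\omega_{ij}(\mathbf{p}_i-\mathbf{p}_j)=0$ for every vertex $i$. *)

(* Defs.v *)
From HB Require Import structures.
From mathcomp Require Import all_boot all_order all_algebra.
From mathcomp Require Import all_classical all_reals all_analysis.
Set Implicit Arguments. Unset Strict Implicit. Unset Printing Implicit Defensive.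
Import Order.TTheory GRing.Theory Num.Theory.
Local Open Scope ring_scope.

(* Planar embedded graphs on V = 'I_n (vertices 0..n-1 stand for 1..n).   *)
(* A graph is a simple graph [adj] (symmetric, irreflexive); an embedding *)
(* is a rotation system [rot]: rot i lists the neighbours of i, without   *)
(* repetition, in counterclockwise order (cyclically).                    *)
Record emb_graph (n : nat) := EmbGraph {
  adj : rel 'I_n;
  rot : 'I_n -> seq 'I_n
}.

Definition dart n (G : emb_graph n) (d : 'I_n * 'I_n) : bool := adj G d.1 d.2.

(* face permutation on darts: (i,j) |-> (j, successor of i around j) *)
Definition face_step n (G : emb_graph n) (d : 'I_n * 'I_n) : 'I_n * 'I_n :=
  if dart G d then (d.2, next (rot G d.2) d.1) else d.

Definition num_faces n (G : emb_graph n) : nat :=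
  #|[set d | dart G d & froot (face_step G) d == d]|.

Definition num_darts n (G : emb_graph n) : nat := #|[set d | dart G d]|.

Definition num_comps n (G : emb_graph n) : nat :=
  #|[set i : 'I_n | fingraph.root (adj G) i == i]|.

Definition num_comps_with_edges n (G : emb_graph n) : nat :=
  #|[set i : 'I_n | (fingraph.root (adj G) i == i) &&
                    [exists j, exists k, (fingraph.root (adj G) j == i) && adj G j k]]|.

Definition is_emb_graph n (G : emb_graph n) : Prop :=
  (forall i j, adj G i j = adj G j i) /\
  (forall i, ~~ adj G i i) /\
  (forall i, uniq (rot G i)) /\
  (forall i j, (j \in rot G i) = adj G i j).

(* The rotation system is planar (genus 0 on every component): Euler's      *)
(* formula V - E + F = 2 for each component having an edge, and 1 for an    *)
(* isolated vertex; summed: 2V - 2E + 2F = 2(c + c_e), where 2E = #darts.   *)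
Definition planar_emb_graph n (G : emb_graph n) : Prop :=
  is_emb_graph G /\
  (n.*2 + (num_faces G).*2 = num_darts G + (num_comps G + num_comps_with_edges G).*2)%N.

Section Packing.
Variable R : realType.

Record config (n : nat) := Config { px : 'I_n -> R; py : 'I_n -> R; pr : 'I_n -> R }.

Definition ccw_ordered n (x y : 'I_n -> R) (x0 y0 : R) (s : seq 'I_n) : Prop :=
  exists theta : nat -> R,
    (forall k, (k.+1 < size s)%N -> theta k < theta k.+1) /\
    ((0 < size s)%N -> theta (size s).-1 < theta 0%N + 2 * pi) /\
    (forall k j, (k < size s)%N -> nth None (map Some s) k = Some j ->
       let dx := x j - x0 in let dy := y j - y0 in
       dx = Num.sqrt (dx ^+ 2 + dy ^+ 2) * cos (theta k) /\
       dy = Num.sqrt (dx ^+ 2 + dy ^+ 2) * sin (theta k)).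

Definition is_packing n (G : emb_graph n) (p : config n) : Prop :=
  (forall i, 0 < pr p i) /\
  (forall i j, adj G i j ->
     (pr p i + pr p j) ^+ 2 = (px p i - px p j) ^+ 2 + (py p i - py p j) ^+ 2) /\
  (forall i, ccw_ordered (px p) (py p) (px p i) (py p i) (rot G i)).

(* vertex classes V^+, V^-, V^=, V^0 *)
Inductive vkind := VPlus | VMinus | VEq | VFree.

Definition inf_flex n (G : emb_graph n) (p q : config n) : Prop :=
  forall i j, adj G i j ->
    (px p i - px p j) * (px q i - px q j) + (py p i - py p j) * (py q i - py q j)
    = (pr p i + pr p j) * (pr q i + pr q j).

Definition proper_flex n (kind : 'I_n -> vkind) (q : config n) : Prop :=
  forall i, match kind i return Prop with
            | VPlus => 0 <= pr q i
            | VMinus => pr q i <= 0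
            | VEq => pr q i = 0
            | VFree => True
            end.

Definition smooth (f : R -> R) : Prop :=
  forall (k : nat) (t : R), derivable (derive1n k f) t 1.

(* q is the derivative at t = 0 of a smooth family of congruent motions      *)
(* (rotation by theta t followed by translation by (a t, b t)), equal to the *)
(* identity at t = 0, applied to all centers, radii unchanged.              *)
Definition trivial_flex n (p q : config n) : Prop :=
  exists theta a b : R -> R,
    [/\ smooth theta, smooth a, smooth b & theta 0 = 0 /\ a 0 = 0 /\ b 0 = 0] /\
    forall i,
      [/\ px q i = derive1 (fun t => cos (theta t) * px p i - sin (theta t) * py p i + a t) 0,
          py q i = derive1 (fun t => sin (theta t) * px p i + cos (theta t) * py p i + b t) 0
        & pr q i = 0].

Definition inf_rigid n (G : emb_graph n) (kind : 'I_n -> vkind) (p : config n) : Prop :=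
  forall q, inf_flex G p q -> proper_flex kind q -> trivial_flex p q.

(* stresses: functions on edges, encoded as symmetric functions on pairs     *)
(* (values on non-edges are irrelevant).                                    *)
Definition is_stress n (G : emb_graph n) (w : 'I_n -> 'I_n -> R) : Prop :=
  forall i j, adj G i j -> w i j = w j i.

Definition equilibrium_stress n (G : emb_graph n) (p : config n) (w : 'I_n -> 'I_n -> R) : Prop :=
  is_stress G w /\
  forall i, \sum_(j | adj G i j) w i j * (px p i - px p j) = 0 /\
            \sum_(j | adj G i j) w i j * (py p i - py p j) = 0.

Definition radial_force n (G : emb_graph n) (p : config n) (w : 'I_n -> 'I_n -> R) (i : 'I_n) : R :=
  \sum_(j | adj G i j) w i j * (pr p i + pr p j).

End Packing.

(* Main.v *)
Require Import Defs.
From HB Require Import structures.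
From mathcomp Require Import all_boot all_order all_algebra.
From mathcomp Require Import all_classical all_reals all_analysis.
From mathcomp Require Import ring lra.
Import Order.TTheory GRing.Theory Num.Theory.
Local Open Scope ring_scope.
Set Implicit Arguments. Unset Strict Implicit.
Section Farkas.
Variables (R : realFieldType) (V : lmodType R).
Definition lin (f : V -> R) := forall (t : R) (x y : V), f (t *: x + y) = t * f x + f y.

Lemma lin0 f : lin f -> f 0 = 0.
Proof.
move=> lf; have := lf 1 0 0; rewrite scale1r addr0 mul1r => h.
by apply/eqP; rewrite -(subrr (f 0)) {2}h addrK.
Qed.

Lemma linN f x : lin f -> f (- x) = - f x.
Proof.
move=> lf; have := lf (-1) x 0; rewrite addr0 scaleN1r (lin0 lf) addr0 => ->.
by rewrite mulN1r.
Qed.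

Lemma linB f x y t : lin f -> f (x - t *: y) = f x - t * f y.
Proof.
move=> lf; have := lf (-t) y x; rewrite scaleNr addrC => ->; ring.
Qed.

Lemma farkas (I : finType) (A : {set I}) : forall (a : I -> V -> R) (c : V -> R),
  (forall i, lin (a i)) -> lin c ->
  (forall x, (forall i, i \in A -> 0 <= a i x) -> 0 <= c x) ->
  exists l : I -> R, (forall i, 0 <= l i) /\ forall x, c x = \sum_(i in A) l i * a i x.
Proof.
have [m] := ubnP #|A|; elim: m A => // m IH A hA a c la lc H.
case: (set_0Vmem A) => [A0 | [i0 Hi0]].
  exists (fun _ => 0); split => // x.
  rewrite A0 big_set0.
  have h1 := H x; have h2 := H (- x).
  rewrite (linN _ lc) in h2.
  have e1 : 0 <= c x by apply: h1 => i; rewrite A0 inE.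
  have e2 : 0 <= - c x by apply: h2 => i; rewrite A0 inE.
  lra.
have hA' : (#|A :\ i0| < m)%N.
  by move: hA; rewrite (cardsD1 i0 A) Hi0 add1n ltnS.
case: (boolp.pselect (forall x, (forall i, i \in A :\ i0 -> 0 <= a i x) -> 0 <= c x)) => [H' | nH'].
  have [l [l0 hl]] := IH _ hA' a c la lc H'.
  exists (fun i => if i == i0 then 0 else l i); split.
    by move=> i; case: eqP.
  move=> x; rewrite (big_setD1 i0) //= eqxx mul0r add0r hl.
  by apply: eq_bigr => i; rewrite in_setD1 => /andP[/negbTE -> _].
have [x0 [Hx0 cx0]] : exists x0, (forall i, i \in A :\ i0 -> 0 <= a i x0) /\ c x0 < 0.
  move/boolp.existsNP: nH' => [x0 /boolp.not_implyP [h1 h2]].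
  by exists x0; split => //; rewrite ltNge; apply/negP.
set d := a i0 x0.
have d0 : d < 0.
  rewrite ltNge; apply/negP => hd.
  have : 0 <= c x0.
    apply: H => i hi; case: (eqVneq i i0) => [-> // | ne].
    by apply: Hx0; rewrite in_setD1 ne hi.
  by rewrite leNgt cx0.
have dn0 : d != 0 by exact: ltr0_neq0.
pose a' := fun (i : I) (x : V) => a i x - (a i x0 / d) * a i0 x.
pose c' := fun (x : V) => c x - (c x0 / d) * a i0 x.
have la' : forall i, lin (a' i).
  by move=> i t x y; rewrite /a' !la; ring.
have lc' : lin c'.
  by move=> t x y; rewrite /c' lc la; ring.
have H'' : forall x, (forall i, i \in A :\ i0 -> 0 <= a' i x) -> 0 <= c' x.
  move=> x Hx.
  pose y := x - (a i0 x / d) *: x0.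
  have ay : forall i, a i y = a' i x.
    by move=> i; rewrite /y (linB _ _ _ (la i)) /a'; ring.
  have cy : c y = c' x by rewrite /y (linB _ _ _ lc) /c'; ring.
  have a0y : a i0 y = 0.
    rewrite /y (linB _ _ _ (la i0)) -/d; field.
    done.
  rewrite -cy; apply: H => i hi; case: (eqVneq i i0) => [-> | ne].
    by rewrite a0y.
  by rewrite ay; apply: Hx; rewrite in_setD1 ne hi.
have [mu [mu0 hmu]] := IH _ hA' a' c' la' lc' H''.
set S := \sum_(k in A :\ i0) mu k * a k x0.
have S0 : 0 <= S by apply: sumr_ge0 => k hk; rewrite mulr_ge0 // Hx0.
exists (fun i => if i == i0 then (c x0 - S) / d else mu i); split.
  move=> i; case: eqP => // _.
  apply: mulr_le0; first lra.
  by rewrite ltW // invr_lt0.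
move=> x; rewrite (big_setD1 i0) //= eqxx.
have -> : \sum_(i in A :\ i0) (if i == i0 then (c x0 - S) / d else mu i) * a i x
    = \sum_(i in A :\ i0) mu i * a i x.
  by apply: eq_bigr => i; rewrite in_setD1 => /andP[/negbTE -> _].
have e1 : c' x = \sum_(i in A :\ i0) mu i * a i x - S / d * a i0 x.
  rewrite hmu /a' /S mulr_suml mulr_suml -sumrB; apply: eq_bigr => i _; ring.
have e2 : c x = c' x + c x0 / d * a i0 x by rewrite /c'; ring.
rewrite e2 e1; ring.
Qed.

End Farkas.
Lemma farkas2 (R : realFieldType) (V : lmodType R) (J I : finType)
  (g : J -> V -> R) (a : I -> V -> R) (c : V -> R) :
  (forall j, lin (g j)) -> (forall i, lin (a i)) -> lin c ->
  (forall x, (forall j, g j x = 0) -> (forall i, 0 <= a i x) -> 0 <= c x) ->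
  exists mu : J -> R, exists l : I -> R, (forall i, 0 <= l i) /\
    forall x, c x = \sum_j mu j * g j x + \sum_i l i * a i x.
Proof.
move=> lg la lc H.
pose b := fun (k : ((J * bool) + I)%type) (x : V) =>
  match k with inl (j, s) => if s then g j x else - g j x | inr i => a i x end.
have lb : forall k, lin (b k).
  case=> [[j []]|i] t x y /=; rewrite ?lg ?la //; ring.
have H' : forall x, (forall k, k \in [set: ((J * bool) + I)%type] -> 0 <= b k x) -> 0 <= c x.
  move=> x Hx; apply: H.
    move=> j; have h1 := Hx (inl (j,true)) (finset.in_setT _).
    have h2 := Hx (inl (j,false)) (finset.in_setT _); simpl in *; lra.
  by move=> i; exact: (Hx (inr i) (finset.in_setT _)).
have [l [l0 hl]] := farkas lb lc H'.
exists (fun j => l (inl (j,true)) - l (inl (j,false))), (fun i => l (inr i)); split => // x.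
rewrite hl.
have -> : \sum_(k in [set: ((J * bool) + I)%type]) l k * b k x = \sum_k l k * b k x.
  by apply: eq_bigl => k; rewrite finset.in_setT.
rewrite big_sumType /=; congr (_ + _).
rewrite (eq_bigr (fun p => l (inl (p.1,p.2)) * b (inl (p.1,p.2)) x)); last by case.
rewrite -(pair_bigA _ (fun j s => l (inl (j,s)) * b (inl (j,s)) x)) /=.
by apply: eq_bigr => j _; rewrite big_bool /=; ring.
Qed.

Section Sums.
Variables (R : realFieldType) (n : nat) (adj : rel 'I_n).
Hypothesis adjS : forall i j, adj i j = adj j i.

Lemma swap_sum (F : 'I_n -> 'I_n -> R) :
  \sum_i \sum_(j | adj i j) F i j = \sum_i \sum_(j | adj i j) F j i.
Proof.
rewrite (eq_bigr (fun i => \sum_j if adj i j then F i j else 0)); last first.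
  by move=> i _; rewrite big_mkcond.
rewrite exchange_big; apply: eq_bigr => j _; rewrite [RHS]big_mkcond.
by apply: eq_bigr => i _; rewrite adjS.
Qed.

Lemma half_sum1 (F : 'I_n -> 'I_n -> R) (v : 'I_n -> R) :
  (forall i j, adj i j -> F j i = - F i j) ->
  \sum_i \sum_(j | adj i j) F i j * (v i - v j) = 2 * \sum_i (\sum_(j | adj i j) F i j) * v i.
Proof.
move=> hF.
rewrite (eq_bigr (fun i => \sum_(j | adj i j) F i j * v i - \sum_(j | adj i j) F i j * v j)); last first.
  by move=> i _; rewrite -sumrB; apply: eq_bigr => j _; ring.
rewrite sumrB (swap_sum (fun i j => F i j * v j)).
rewrite (eq_bigr (fun i => - \sum_(j | adj i j) F i j * v i) (F1 := fun i => \sum_(j | adj i j) F j i * v i)); last first.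
  by move=> i _; rewrite -sumrN; apply: eq_bigr => j hj; rewrite hF // mulNr.
rewrite sumrN opprK mulr2n mulrDl mul1r; congr (_ + _); apply: eq_bigr => i _; by rewrite mulr_suml.
Qed.

Lemma half_sum2 (F : 'I_n -> 'I_n -> R) (v : 'I_n -> R) :
  (forall i j, adj i j -> F j i = F i j) ->
  \sum_i \sum_(j | adj i j) F i j * (v i + v j) = 2 * \sum_i (\sum_(j | adj i j) F i j) * v i.
Proof.
move=> hF.
rewrite (eq_bigr (fun i => \sum_(j | adj i j) F i j * v i + \sum_(j | adj i j) F i j * v j)); last first.
  by move=> i _; rewrite -big_split; apply: eq_bigr => j _ /=; ring.
rewrite big_split /= (swap_sum (fun i j => F i j * v j)).
rewrite (eq_bigr (fun i => \sum_(j | adj i j) F i j * v i) (F1 := fun i => \sum_(j | adj i j) F j i * v i)); last first.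
  by move=> i _; apply: eq_bigr => j hj; rewrite hF.
rewrite mulr2n mulrDl mul1r; congr (_ + _); apply: eq_bigr => i _; by rewrite mulr_suml.
Qed.

Lemma sum_delta (F : 'I_n -> R) v : \sum_i (i == v)%:R * F i = F v.
Proof.
rewrite (bigD1 v) //= eqxx mul1r big1 ?addr0 // => i /negbTE ->; by rewrite mul0r.
Qed.

Lemma pair_delta (M : 'I_n * 'I_n -> R) (h : 'I_n -> 'I_n -> R) v s :
  \sum_(ij : 'I_n * 'I_n) M ij * (if adj ij.1 ij.2 then h ij.1 ij.2 * ((ij.1 == v)%:R + s * (ij.2 == v)%:R) else 0)
  = \sum_(j | adj v j) (M (v,j) * h v j + s * (M (j,v) * h j v)).
Proof.
pose Y := fun i j => if adj i j then M (i,j) * h i j else 0.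
rewrite (eq_bigr (fun ij => (ij.1 == v)%:R * Y ij.1 ij.2 + s * ((ij.2 == v)%:R * Y ij.1 ij.2))); last first.
  by case=> i j _ /=; rewrite /Y; case: (adj i j); ring.
rewrite -(pair_bigA _ (fun i j => (i == v)%:R * Y i j + s * ((j == v)%:R * Y i j))) /=.
rewrite (eq_bigr (fun i => (i == v)%:R * \sum_j Y i j + s * \sum_j (j == v)%:R * Y i j)); last first.
  by move=> i _; rewrite big_split /= -mulr_sumr -mulr_sumr.
rewrite big_split /= sum_delta -mulr_sumr exchange_big /=.
rewrite [X in s * X](eq_bigr (fun j => (j == v)%:R * \sum_i Y i j)); last first.
  by move=> j _; rewrite mulr_sumr.
rewrite sum_delta big_split /= -mulr_sumr /Y -!big_mkcond; congr (_ + _); congr (_ * _).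
by apply: eq_bigl => j; rewrite adjS.
Qed.

End Sums.

Lemma sum_delta' (R : realFieldType) n (F : 'I_n -> R) v : \sum_i F i * (i == v)%:R = F v.
Proof.
rewrite (bigD1 v) //= eqxx mulr1 big1 ?addr0 // => i /negbTE ->; by rewrite mulr0.
Qed.
Unset Implicit Arguments.
Definition r0 : 'I_3 := @Ordinal 3 0 isT.
Definition r1 : 'I_3 := @Ordinal 3 1 isT.
Definition r2 : 'I_3 := @Ordinal 3 2 isT.

Definition cfg {R : realType} {n} (Q : 'M[R]_(3,n)) : config R n :=
  @Config R n (fun i => Q r0 i) (fun i => Q r1 i) (fun i => Q r2 i).

Definition feq {R : realType} {n} (p q : config R n) i j :=
  (px p i - px p j) * (px q i - px q j) + (py p i - py p j) * (py q i - py q j)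
  - (pr p i + pr p j) * (pr q i + pr q j).

Definition unitQ (R : realType) {n} (r : nat) (v : 'I_n) : 'M[R]_(3,n) :=
  \matrix_(a, c) ((nat_of_ord a == r) && (c == v))%:R.

Lemma stress_zero (R : realType) n (G : emb_graph n) (p q : config R n) w :
  (forall i j, adj G i j = adj G j i) ->
  equilibrium_stress G p w -> inf_flex G p q ->
  \sum_i radial_force G p w i * pr q i = 0.
Proof.
move=> adjS [ws weq] fq.
have h2 := @half_sum2 R n (adj G) adjS (fun i j => w i j * (pr p i + pr p j)) (pr q).
have hx := @half_sum1 R n (adj G) adjS (fun i j => w i j * (px p i - px p j)) (px q).
have hy := @half_sum1 R n (adj G) adjS (fun i j => w i j * (py p i - py p j)) (py q).
rewrite /= in h2 hx hy.
have e2 : \sum_i \sum_(j | adj G i j) w i j * (pr p i + pr p j) * (pr q i + pr q j)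
   = 2 * \sum_i radial_force G p w i * pr q i.
  rewrite /radial_force h2 // => i j hij; rewrite (ws i j hij); ring.
have ex : \sum_i \sum_(j | adj G i j) w i j * (px p i - px p j) * (px q i - px q j) = 0.
  rewrite hx; last by move=> i j hij; rewrite (ws i j hij); ring.
  by rewrite big1 ?mulr0 // => i _; rewrite (proj1 (weq i)) mul0r.
have ey : \sum_i \sum_(j | adj G i j) w i j * (py p i - py p j) * (py q i - py q j) = 0.
  rewrite hy; last by move=> i j hij; rewrite (ws i j hij); ring.
  by rewrite big1 ?mulr0 // => i _; rewrite (proj2 (weq i)) mul0r.
have : \sum_i \sum_(j | adj G i j) w i j * (pr p i + pr p j) * (pr q i + pr q j)
   = \sum_i \sum_(j | adj G i j) w i j * (px p i - px p j) * (px q i - px q j)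
   + \sum_i \sum_(j | adj G i j) w i j * (py p i - py p j) * (py q i - py q j).
  rewrite -big_split; apply: eq_bigr => i _; rewrite -big_split; apply: eq_bigr => j hj /=.
  by rewrite -!mulrA -mulrDr (fq i j hj).
rewrite e2 ex ey addr0 => /eqP; rewrite mulf_eq0 pnatr_eq0 /= => /eqP //.
Qed.

Theorem mainTheorem1 (R : realType) (n : nat) (G : emb_graph n) (p : config R n)
    (kind : 'I_n -> vkind) :
  planar_emb_graph G -> is_packing G p ->
  (inf_rigid G kind p <->
   ((forall q : config R n, inf_flex G p q ->
       (forall k, kind k <> VFree -> pr q k = 0) -> trivial_flex p q) /\
    (exists w : 'I_n -> 'I_n -> R, equilibrium_stress G p w /\
       forall i, match kind i return Prop with
                 | VMinus => 0 < radial_force G p w i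
                 | VPlus => radial_force G p w i < 0
                 | VFree => radial_force G p w i = 0
                 | VEq => True
                 end))).
Proof.
move=> [[adjS _] _] _.
split; last first.
  move=> [h1 [w [ew wr]]] q fq pq; apply: h1 => // k nk.
  have S0 := @stress_zero R n G p q w adjS ew fq.
  have tle : forall i, 0 <= - (radial_force G p w i * pr q i).
    move=> i; have := wr i; have := pq i; case: (kind i) => /=.
    - by move=> h1 h2; rewrite oppr_ge0 mulr_le0_ge0 // ltW.
    - by move=> h1 h2; rewrite oppr_ge0 mulr_ge0_le0 // ltW.
    - by move=> -> _; rewrite mulr0 oppr0.
    - by move=> _ ->; rewrite mul0r oppr0.
  have := @psumr_eq0P _ _ predT _ (fun i _ => tle i).
  rewrite sumrN S0 oppr0 => /(_ erefl k erefl) /eqP; rewrite oppr_eq0 mulf_eq0.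
  case/orP => [/eqP r0' | /eqP //].
  have := wr k; have := pq k; rewrite r0'.
  by case: (kind k) nk => //= _; rewrite ltxx.
move=> rig; split.
  move=> q fq h; apply: rig => // i.
  by case E: (kind i) => //; rewrite h // E.
pose g := fun (k : (('I_n * 'I_n) + 'I_n)%type) (Q : 'M[R]_(3,n)) =>
  match k with
  | inl (i,j) => if adj G i j then feq p (cfg Q) i j else 0
  | inr k => if kind k is VEq then Q r2 k else 0 end.
pose a := fun (k : 'I_n) (Q : 'M[R]_(3,n)) =>
  match kind k with VPlus => Q r2 k | VMinus => - Q r2 k | _ => 0 end.
have lg : forall j, lin (g j).
  case=> [[i j]|k] t x y /=; [case: (adj G i j) | case: (kind k)];
    rewrite /feq /= ?mxE; ring.
have la : forall k, lin (a k).
  by move=> k t x y; rewrite /a; case: (kind k); rewrite ?mxE; ring.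
have hk : forall k, exists ml : ((('I_n * 'I_n) + 'I_n)%type -> R) * ('I_n -> R),
    (forall i, 0 <= ml.2 i) /\
    forall Q, - a k Q = \sum_j ml.1 j * g j Q + \sum_i ml.2 i * a i Q.
  move=> k.
  have lc : lin (fun Q => - a k Q) by move=> t x y; rewrite la; ring.
  have H : forall Q, (forall j, g j Q = 0) -> (forall i, 0 <= a i Q) -> 0 <= - a k Q.
    move=> Q hg ha.
    have fl : inf_flex G p (cfg Q).
      move=> i j hij; have := hg (inl (i,j)); rewrite /= hij /feq => /eqP.
      by rewrite subr_eq0 => /eqP.
    have pf : proper_flex kind (cfg Q).
      move=> i; have := hg (inr i); have := ha i; rewrite /a /=; case: (kind i) => //=.
      - by move=> h _; rewrite -oppr_ge0.
    have [th [a0 [b0 [_ tr]]]] := rig _ fl pf.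
    have [_ _ hk] := tr k; rewrite /= in hk.
    by rewrite /a; case: (kind k); rewrite ?hk ?oppr0.
  have [mu [l [l0 hl]]] := farkas2 lg la lc H.
  by exists (mu, l).
case: (boolp.choice hk) => f hf.
pose M := fun j => \sum_k (f k).1 j.
pose L := fun i => \sum_k (f k).2 i.
have L0 : forall i, 0 <= L i by move=> i; apply: sumr_ge0 => k _; exact: (hf k).1.
have key : forall Q, \sum_j M j * g j Q + \sum_i (1 + L i) * a i Q = 0.
  move=> Q.
  have E : \sum_k - a k Q = \sum_k (\sum_j (f k).1 j * g j Q + \sum_i (f k).2 i * a i Q).
    by apply: eq_bigr => k _; exact: (hf k).2 Q.
  rewrite big_split /= sumrN in E.
  have E1 : \sum_k \sum_j (f k).1 j * g j Q = \sum_j M j * g j Q.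
    by rewrite exchange_big; apply: eq_bigr => j _; rewrite /M mulr_suml.
  have E2 : \sum_k \sum_i (f k).2 i * a i Q = \sum_i L i * a i Q.
    by rewrite exchange_big; apply: eq_bigr => i _; rewrite /L mulr_suml.
  have E3 : \sum_i (1 + L i) * a i Q = \sum_i a i Q + \sum_i L i * a i Q.
    by rewrite -big_split; apply: eq_bigr => i _ /=; ring.
  rewrite E3; rewrite E1 E2 in E; lra.
pose w := fun i j => - (M (inl (i,j)) + M (inl (j,i))).
have ga : forall r v i, (r != 2)%N -> a i (unitQ R r v) = 0.
  move=> r v i hr; rewrite /a /unitQ; case: (kind i) => //; rewrite mxE /=;
    by rewrite eq_sym (negbTE hr) /= ?mulr0n ?oppr0.
have ginr : forall r v k, (r != 2)%N -> g (inr k) (unitQ R r v) = 0.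
  move=> r v k hr; rewrite /g /unitQ; case: (kind k) => //; rewrite mxE /=;
    by rewrite eq_sym (negbTE hr) /= ?mulr0n.
have reduce : forall r v, (r != 2)%N ->
    \sum_(ij : 'I_n * 'I_n) M (inl ij) * g (inl ij) (unitQ R r v) = 0.
  move=> r v hr; have := key (unitQ R r v).
  rewrite big_sumType [X in _ + X + _]big1; last by move=> k _; rewrite ginr // mulr0.
  by rewrite [X in _ + X]big1 ?addr0 // => i _; rewrite ga // mulr0.
have eqx : forall v, \sum_(j | adj G v j) w v j * (px p v - px p j) = 0.
  move=> v; have := reduce 0%N v isT.
  rewrite (eq_bigr (fun ij : 'I_n * 'I_n => M (inl ij) * (if adj G ij.1 ij.2 then
     (px p ij.1 - px p ij.2) * ((ij.1 == v)%:R + -1 * (ij.2 == v)%:R) else 0))); last first.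
    case=> i j _ /=; case: (adj G i j) => //; rewrite /feq /cfg /unitQ /= !mxE /=; ring.
  rewrite (@pair_delta R n (adj G) adjS (fun ij => M (inl ij)) (fun i j => px p i - px p j) v (-1)) => h.
  have -> : \sum_(j | adj G v j) w v j * (px p v - px p j) = - \sum_(j | adj G v j)
     (M (inl (v, j)) * (px p v - px p j) + -1 * (M (inl (j, v)) * (px p j - px p v))).
    by rewrite -sumrN; apply: eq_bigr => j _; rewrite /w; ring.
  by rewrite h oppr0.
have eqy : forall v, \sum_(j | adj G v j) w v j * (py p v - py p j) = 0.
  move=> v; have := reduce 1%N v isT.
  rewrite (eq_bigr (fun ij : 'I_n * 'I_n => M (inl ij) * (if adj G ij.1 ij.2 then
     (py p ij.1 - py p ij.2) * ((ij.1 == v)%:R + -1 * (ij.2 == v)%:R) else 0))); last first.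
    case=> i j _ /=; case: (adj G i j) => //; rewrite /feq /cfg /unitQ /= !mxE /=; ring.
  rewrite (@pair_delta R n (adj G) adjS (fun ij => M (inl ij)) (fun i j => py p i - py p j) v (-1)) => h.
  have -> : \sum_(j | adj G v j) w v j * (py p v - py p j) = - \sum_(j | adj G v j)
     (M (inl (v, j)) * (py p v - py p j) + -1 * (M (inl (j, v)) * (py p j - py p v))).
    by rewrite -sumrN; apply: eq_bigr => j _; rewrite /w; ring.
  by rewrite h oppr0.
exists w; split.
  split; first by move=> i j _; rewrite /w addrC.
  by move=> v; split; [exact: eqx | exact: eqy].
move=> v.
have := key (unitQ R 2 v).
rewrite big_sumType /=.
rewrite (eq_bigr (fun ij : 'I_n * 'I_n => M (inl ij) * (if adj G ij.1 ij.2 then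
     (- (pr p ij.1 + pr p ij.2)) * ((ij.1 == v)%:R + 1 * (ij.2 == v)%:R) else 0))); last first.
  case=> i j _ /=; case: (adj G i j) => //; rewrite /feq /cfg /unitQ /= !mxE /=; ring.
rewrite (@pair_delta R n (adj G) adjS (fun ij => M (inl ij)) (fun i j => - (pr p i + pr p j)) v 1).
rewrite [X in _ + X + _](eq_bigr (fun k => (M (inr k) * (if kind k is VEq then 1 else 0)) * (k == v)%:R)); last first.
  move=> k _; rewrite /g /unitQ; case: (kind k) => //=; rewrite ?mxE /= ?mulr0 ?mul0r //; ring.
rewrite sum_delta'.
rewrite [X in _ + X](eq_bigr (fun i => ((1 + L i) * (match kind i with VPlus => 1 | VMinus => -1 | _ => 0 end)) * (i == v)%:R)); last first.
  move=> i _; rewrite /a /unitQ; case: (kind i) => //=; rewrite ?mxE /= ?mulr0 ?mul0r //; ring.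
rewrite sum_delta'.
have -> : \sum_(j | adj G v j) (M (inl (v, j)) * - (pr p v + pr p j) + 1 * (M (inl (j, v)) * - (pr p j + pr p v)))
   = radial_force G p w v.
  by rewrite /radial_force; apply: eq_bigr => j _; rewrite /w; ring.
have Lv := L0 v.
case: (kind v) => /= h; lra.
Qed.
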